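(* Let $z_1,z_2,z_3,z_4\in\mathbb{C}$ be the vertices of a convex quadrilateral, labelled in cyclic order around its boundary, and for $j=1,\dots,4$ (indices mod $4$) let $$\alpha_j=\angle z_{j+1}z_jz_{j+2},\qquad \beta_j=\angle z_{j+2}z_jz_{j-1},\qquad \gamma_j=\angle z_{j-1}z_jz_{j+1}.$$ Define $$S_1=\sum_{j=1}^4(\cos\alpha_j+\cos\beta_j+\cos\gamma_j),\qquad S_2=\sum_{j=1}^4(\cos\alpha_j+\cos\beta_j+\cos\gamma_j)(\cos\alpha_{j+1}+\cos\gamma_{j+2}+\cos\beta_{j+3}).$$ Then $8S_1+2S_2\ge 40$.
   Context: Angles $\angle XYZ\in[0,\pi]$ denote the usual unsigned angle at $Y$ between the segments $YX$ and $YZ$. *)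

(* Defs.v *)
From Stdlib Require Import Reals Lra.
From Coquelicot Require Import Coquelicot.
Open Scope R_scope.

Definition angle (X Y Z : C) : R :=
  acos (Re ((X - Y)%C * Cconj (Z - Y)%C) / (Cmod (X - Y)%C * Cmod (Z - Y)%C)).

(* Signed (doubled) area of the triangle a b c: positive iff a, b, c is a
   counterclockwise (left) turn. *)
Definition orient (a b c : C) : R := Im (Cconj (b - a)%C * (c - a)%C).

(* Cyclic indexing of the four vertices: index j is taken mod 4,
   index 0 <-> z1, 1 <-> z2, 2 <-> z3, 3 <-> z4. *)
Definition vtx (z1 z2 z3 z4 : C) (j : nat) : C :=
  match j mod 4 with
  | 0 => z1 | 1 => z2 | 2 => z3 | _ => z4
  end.

(* z1 z2 z3 z4 are the vertices, in cyclic order, of a (non-degenerate)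
   convex quadrilateral: all four consecutive turns are strictly in the same
   direction (either all counterclockwise or all clockwise). *)
Definition convex_quad (z1 z2 z3 z4 : C) : Prop :=
  let z := vtx z1 z2 z3 z4 in
  (forall j, (j < 4)%nat -> 0 < orient (z j) (z (j+1)%nat) (z (j+2)%nat)) \/
  (forall j, (j < 4)%nat -> orient (z j) (z (j+1)%nat) (z (j+2)%nat) < 0).

(* alpha_j = angle z_{j+1} z_j z_{j+2}, beta_j = angle z_{j+2} z_j z_{j-1},
   gamma_j = angle z_{j-1} z_j z_{j+1}; indices mod 4 (j-1 == j+3). *)
Definition alpha (z1 z2 z3 z4 : C) (j : nat) : R :=
  let z := vtx z1 z2 z3 z4 in angle (z (j+1)%nat) (z j) (z (j+2)%nat).
Definition beta (z1 z2 z3 z4 : C) (j : nat) : R :=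
  let z := vtx z1 z2 z3 z4 in angle (z (j+2)%nat) (z j) (z (j+3)%nat).
Definition gamma (z1 z2 z3 z4 : C) (j : nat) : R :=
  let z := vtx z1 z2 z3 z4 in angle (z (j+3)%nat) (z j) (z (j+1)%nat).

Definition csum (z1 z2 z3 z4 : C) (j : nat) : R :=
  cos (alpha z1 z2 z3 z4 j) + cos (beta z1 z2 z3 z4 j) + cos (gamma z1 z2 z3 z4 j).

Definition S1 (z1 z2 z3 z4 : C) : R := sum_f_R0 (csum z1 z2 z3 z4) 3.

Definition S2 (z1 z2 z3 z4 : C) : R :=
  sum_f_R0 (fun j => csum z1 z2 z3 z4 j *
    (cos (alpha z1 z2 z3 z4 (j+1)%nat) + cos (gamma z1 z2 z3 z4 (j+2)%nat)
     + cos (beta z1 z2 z3 z4 (j+3)%nat))) 3.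

(* Main.v *)
Require Import Defs.
From Stdlib Require Import Reals Lra Psatz.
From Coquelicot Require Import Coquelicot.
Open Scope R_scope.

Lemma dsym (X Y : C) : Cmod (X - Y) = Cmod (Y - X).
Proof.
  rewrite <- Cmod_opp. f_equal. destruct X, Y. unfold Copp, Cminus, Cplus, Copp. simpl.
  apply injective_projections; simpl; ring.
Qed.

Lemma dpos (X Y : C) : X <> Y -> 0 < Cmod (X - Y).
Proof.
  intro H. apply Cmod_gt_0. intro E. apply H.
  destruct X, Y. unfold Cminus, Cplus, Copp in E. simpl in E. injection E; intros.
  apply injective_projections; simpl; lra.
Qed.

Lemma cos_angle X Y Z : X <> Y -> Z <> Y ->
  cos (angle X Y Z) = (Cmod (X - Y) ^ 2 + Cmod (Z - Y) ^ 2 - Cmod (X - Z) ^ 2)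
                        / (2 * Cmod (X - Y) * Cmod (Z - Y)).
Proof.
  intros H1 H2. pose proof (dpos _ _ H1). pose proof (dpos _ _ H2).
  assert (E : Re ((X - Y)%C * Cconj (Z - Y)%C) =
     (Cmod (X - Y) ^ 2 + Cmod (Z - Y) ^ 2 - Cmod (X - Z) ^ 2) / 2).
  { rewrite !Cmod2_alt. destruct X, Y, Z. simpl. field. }
  unfold angle. rewrite cos_acos.
  - rewrite E. field. lra.
  - pose proof (re_le_Cmod ((X - Y)%C * Cconj (Z - Y)%C)) as B.
    rewrite Cmod_mult, Cmod_conj in B.
    assert (P : 0 < Cmod (X - Y) * Cmod (Z - Y)) by nra.
    apply Rabs_le_between in B. destruct B as [B1 B2].
    split.
    + apply (Rmult_le_reg_r (Cmod (X - Y) * Cmod (Z - Y))); auto.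
      unfold Rdiv. rewrite Rmult_assoc, Rinv_l; lra.
    + apply (Rmult_le_reg_r (Cmod (X - Y) * Cmod (Z - Y))); auto.
      unfold Rdiv. rewrite Rmult_assoc, Rinv_l; lra.
Qed.

Lemma alg a b c : 0 < a -> 0 < b -> 0 < c -> a <= b + c -> b <= a + c -> c <= a + b ->
  (b^2 + c^2 - a^2) / (2*b*c) + (a^2 + c^2 - b^2) / (2*a*c) + (a^2 + b^2 - c^2)/(2*a*b) >= 1.
Proof.
  intros. assert (E : (b^2 + c^2 - a^2) / (2*b*c) + (a^2 + c^2 - b^2) / (2*a*c) + (a^2 + b^2 - c^2)/(2*a*b)
    = 1 + (b + c - a) * (a + c - b) * (a + b - c) / (2*a*b*c)) by (field; repeat split; apply Rgt_not_eq; assumption).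
  rewrite E. assert (0 <= (b + c - a) * (a + c - b) * (a + b - c) / (2*a*b*c)).
  { unfold Rdiv. apply Rmult_le_pos.
    - apply Rmult_le_pos; [apply Rmult_le_pos|]; lra.
    - left. apply Rinv_0_lt_compat. apply Rmult_lt_0_compat; [apply Rmult_lt_0_compat|]; lra. }
  lra.
Qed.

Lemma tri3 (X Y Z : C) : Cmod (X - Z) <= Cmod (X - Y) + Cmod (Y - Z).
Proof.
  replace (X - Z)%C with ((X - Y) + (Y - Z))%C. apply Cmod_triangle.
  destruct X, Y, Z. apply injective_projections; simpl; ring.
Qed.

Lemma orient_neq (X Y Z : C) : orient X Y Z <> 0 -> X <> Y /\ Y <> Z /\ X <> Z.
Proof.
  intros H. unfold orient in H. destruct X as [x1 x2], Y as [y1 y2], Z as [w1 w2]. simpl in H.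
  repeat split; intro E; injection E; intros; subst; apply H; ring.
Qed.

Lemma tri (X Y Z : C) : orient X Y Z <> 0 ->
  cos (angle Y X Z) + cos (angle X Y Z) + cos (angle X Z Y) >= 1.
Proof.
  intro H. destruct (orient_neq _ _ _ H) as [h1 [h2 h3]].
  rewrite !cos_angle; try (intro E; subst; tauto).
  rewrite (dsym Y X), (dsym Z X), (dsym Z Y).
  pose proof (dpos _ _ h1). pose proof (dpos _ _ h2). pose proof (dpos _ _ h3).
  pose proof (tri3 X Y Z). pose proof (tri3 Y X Z). pose proof (tri3 X Z Y).
  rewrite (dsym Y X), (dsym Z Y) in *.
  set (a := Cmod (Y - Z)) in *. set (b := Cmod (X - Z)) in *. set (c := Cmod (X - Y)) in *.
  pose proof (alg a b c) as HA.
  match goal with |- ?L >= 1 => replace L with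
   ((b^2 + c^2 - a^2) / (2*b*c) + (a^2 + c^2 - b^2) / (2*a*c) + (a^2 + b^2 - c^2)/(2*a*b)) end.
  - apply HA; lra.
  - field; repeat split; apply Rgt_not_eq; assumption.
Qed.

Lemma angle_sym X Y Z : angle X Y Z = angle Z Y X.
Proof.
  unfold angle. rewrite (Rmult_comm (Cmod (X - Y))). f_equal. f_equal.
  destruct X, Y, Z; simpl; ring.
Qed.

Theorem corollary2 (z1 z2 z3 z4 : C) :
  convex_quad z1 z2 z3 z4 ->
  8 * S1 z1 z2 z3 z4 + 2 * S2 z1 z2 z3 z4 >= 40.
Proof.
  intro H. unfold convex_quad in H.
  assert (O : forall j, (j < 4)%nat -> orient (vtx z1 z2 z3 z4 j) (vtx z1 z2 z3 z4 (j+1)) (vtx z1 z2 z3 z4 (j+2)) <> 0).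
  { intros j Hj; destruct H as [H|H]; specialize (H j Hj); lra. }
  pose proof (O 0%nat ltac:(lia)) as O0. pose proof (O 1%nat ltac:(lia)) as O1.
  pose proof (O 2%nat ltac:(lia)) as O2. pose proof (O 3%nat ltac:(lia)) as O3.
  simpl in O0, O1, O2, O3.
  unfold S1, S2, csum, alpha, beta, gamma, vtx in *. simpl in *.
  pose proof (tri _ _ _ O0) as T0. pose proof (tri _ _ _ O1) as T1.
  pose proof (tri _ _ _ O2) as T2. pose proof (tri _ _ _ O3) as T3.
  try rewrite (angle_sym z3 z1 z2) in *.
  try rewrite (angle_sym z4 z1 z2) in *.
  try rewrite (angle_sym z4 z1 z3) in *.
  try rewrite (angle_sym z3 z2 z1) in *.
  try rewrite (angle_sym z4 z2 z1) in *.
  try rewrite (angle_sym z4 z2 z3) in *.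
  try rewrite (angle_sym z2 z3 z1) in *.
  try rewrite (angle_sym z4 z3 z1) in *.
  try rewrite (angle_sym z4 z3 z2) in *.
  try rewrite (angle_sym z2 z4 z1) in *.
  try rewrite (angle_sym z3 z4 z1) in *.
  try rewrite (angle_sym z3 z4 z2) in *.
  pose proof (COS_bound (angle z2 z1 z3)) as Ba1. set (a1 := cos (angle z2 z1 z3)) in *.
  pose proof (COS_bound (angle z3 z1 z4)) as Ba2. set (a2 := cos (angle z3 z1 z4)) in *.
  pose proof (COS_bound (angle z2 z1 z4)) as Ba3. set (a3 := cos (angle z2 z1 z4)) in *.
  pose proof (COS_bound (angle z3 z2 z4)) as Bb1. set (b1 := cos (angle z3 z2 z4)) in *.
  pose proof (COS_bound (angle z1 z2 z4)) as Bb2. set (b2 := cos (angle z1 z2 z4)) in *.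
  pose proof (COS_bound (angle z1 z2 z3)) as Bb3. set (b3 := cos (angle z1 z2 z3)) in *.
  pose proof (COS_bound (angle z1 z3 z4)) as Bc1. set (c1 := cos (angle z1 z3 z4)) in *.
  pose proof (COS_bound (angle z1 z3 z2)) as Bc2. set (c2 := cos (angle z1 z3 z2)) in *.
  pose proof (COS_bound (angle z2 z3 z4)) as Bc3. set (c3 := cos (angle z2 z3 z4)) in *.
  pose proof (COS_bound (angle z1 z4 z2)) as Bd1. set (d1 := cos (angle z1 z4 z2)) in *.
  pose proof (COS_bound (angle z2 z4 z3)) as Bd2. set (d2 := cos (angle z2 z4 z3)) in *.
  pose proof (COS_bound (angle z1 z4 z3)) as Bd3. set (d3 := cos (angle z1 z4 z3)) in *.
  assert (P1 : 0 <= (a1+a2+a3+5) * (b1+c3+d2-1)) by (apply Rmult_le_pos; lra).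
  assert (P2 : 0 <= (b1+b2+b3+5) * (c1+d3+a2-1)) by (apply Rmult_le_pos; lra).
  assert (P3 : 0 <= (c1+c2+c3+5) * (d1+a3+b2-1)) by (apply Rmult_le_pos; lra).
  assert (P4 : 0 <= (d1+d2+d3+5) * (a1+b3+c2-1)) by (apply Rmult_le_pos; lra).
  lra.
Qed.
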